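(* Let $X$ be a real Hilbert space, let $\rho>-1$ and let $A\colon X\rightrightarrows X$ be $\rho$-comonotone with $\operatorname{ran}(\mathrm{Id}+A)=X$. Then $A$ is maximally $\rho$-comonotone.
   Context: For $\rho\in\mathbb R$, $A\colon X\rightrightarrows X$ is $\rho$-comonotone if $\langle x-y,u-v\rangle\ge\rho\|u-v\|^2$ for all $(x,u),(y,v)\in\operatorname{gra}A$; maximally $\rho$-comonotone if moreover no $\rho$-comonotone operator has a graph properly containing $\operatorname{gra}A$. *)

(* Defs.v *)
From HB Require Import structures.
From mathcomp Require Import all_boot all_order all_algebra.
From mathcomp Require Import all_classical all_reals all_analysis.
Set Implicit Arguments. Unset Strict Implicit. Unset Printing Implicit Defensive.
Import Order.TTheory GRing.Theory Num.Theory.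
Import numFieldNormedType.Exports.
Local Open Scope ring_scope.

(* A real Hilbert space is modelled as a complete normed space X over a
   realType R together with an inner product [ip] inducing its norm. *)
Definition is_inner_product (R : realType) (X : completeNormedModType R)
  (ip : X -> X -> R) : Prop :=
  [/\ (forall x y, ip x y = ip y x),
      (forall a x y z, ip (a *: x + y) z = a * ip x z + ip y z)
    & (forall x, ip x x = `|x| ^+ 2)].

(* Set-valued operators A : X ⇉ X, represented by their graph:
   u ∈ A x  iff  A x u. *)
Definition comonotone (R : realType) (X : completeNormedModType R)
  (ip : X -> X -> R) (rho : R) (A : X -> X -> Prop) : Prop :=
  forall x u y v, A x u -> A y v -> rho * `|u - v| ^+ 2 <= ip (x - y) (u - v).

Definition maximally_comonotone (R : realType) (X : completeNormedModType R)
  (ip : X -> X -> R) (rho : R) (A : X -> X -> Prop) : Prop :=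
  comonotone ip rho A /\
  forall B : X -> X -> Prop, comonotone ip rho B ->
    (forall x u, A x u -> B x u) ->
    ~ (exists x u, B x u /\ ~ A x u).

Definition range_id_plus_full (R : realType) (X : completeNormedModType R)
  (A : X -> X -> Prop) : Prop :=
  forall z : X, exists x u, A x u /\ z = x + u.

(* Main.v *)
Require Import Defs.
From mathcomp Require Import all_boot all_order all_algebra.
From mathcomp Require Import all_classical all_reals all_analysis.
From mathcomp Require Import lra.
Import Order.TTheory GRing.Theory Num.Theory.
Import numFieldNormedType.Exports.
Local Open Scope ring_scope.

Theorem proposition2p15 (R : realType) (X : completeNormedModType R)
  (ip : X -> X -> R) (hip : is_inner_product ip)
  (rho : R) (hrho : -1 < rho) (A : X -> X -> Prop) :
  comonotone ip rho A -> range_id_plus_full A -> maximally_comonotone ip rho A.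
Proof.
move=> hA hran; split => // B hB hAB [x [u [Bxu nAxu]]].
case: hip => _ hlin hnorm.
have [y [v [Ayv exy]]] := hran (x + u).
have := hB _ _ _ _ Bxu (hAB _ _ Ayv).
have -> : x - y = (-1) *: (u - v) + 0.
  rewrite addr0 scaleN1r opprB -[x](addrK u) exy.
  by rewrite addrAC [y + v]addrC addrK.
have ip0 : forall z, ip 0 z = 0.
  move=> z; have h := hlin 1 0 0 z; rewrite scaler0 addr0 mul1r in h.
  by move: h; rewrite -{1}[ip 0 z]addr0 => /addrI <-.
rewrite hlin ip0 addr0 hnorm => h.
have hn : `|u - v| ^+ 2 <= 0.
  have h2 : (1 + rho) * `|u - v| ^+ 2 <= 0 by rewrite mulrDl mul1r; lra.
  by rewrite -(pmulr_rle0 _ (_ : 0 < 1 + rho)) //; lra.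
have : `|u - v| = 0.
  apply/eqP; rewrite -sqrf_eq0; apply/eqP/le_anti; rewrite hn /=.
  exact: exprn_ge0.
move/normr0_eq0/eqP; rewrite subr_eq0 => /eqP uv.
subst v; apply: nAxu.
have -> : x = y by exact: (addIr u exy).
done.
Qed.
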